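(* Let $\mathcal G$ be a $\Gamma$-periodic graph with fundamental graph $\mathcal G_*=(\mathcal V_*,\mathcal A_* )=\mathcal G/\Gamma$, where $\Gamma$ has rank $d$, and let $\beta$ be the Betti number of $\mathcal G_*$. Then: (i) there exists a basis $\{\mathbf c_1,\dots,\mathbf c_\beta\}$ of the cycle space $\mathcal C$ of $\mathcal G_*$ such that $\tau(\mathbf c_1),\dots,\tau(\mathbf c_d)$ form the standard orthonormal basis of $\mathbb Z^d$, and $\{\mathbf c_{d+1},\dots,\mathbf c_\beta\}$ is a basis of the subspace $\mathcal C^0$ of all cycles of $\mathcal G_*$ with zero index; (ii) $\{\mathbf c_1,\dots,\mathbf c_\beta\}\cup\{\mathbf e_x\}_{x\in\mathcal V_*}$ is a basis of the cycle space $\widetilde{\mathcal C}$ of the modified fundamental graph $\widetilde{\mathcal G}_*=(\mathcal V_*,\mathcal A_*\cup\{\mathbf e_x\}_{x\in\mathcal V_*})$, where $\mathbf e_x$ is a loop at the vertex $x$.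
   Context: Let $\Gamma\subset\mathbb R^d$ be a lattice with basis $\mathfrak a_1,\dots,\mathfrak a_d$ and fundamental cell $\Omega=\{\sum_sx_s\mathfrak a_s:(x_s)\in[0,1)^d\}$. A $\Gamma$-periodic graph $\mathcal G=(\mathcal V,\mathcal E)$ is a connected, locally finite, infinite graph embedded in $\mathbb R^d$ (loops and multiple edges allowed), invariant under translations by $\Gamma$, whose quotient $\mathcal G_*=(\mathcal V_*,\mathcal E_* )$ is finite; $\beta=\#\mathcal E_*-\#\mathcal V_*+1$. Oriented edges: $\mathcal A_*$. Edge index: write $x=x_0+[x]$ with $x_0\in\mathcal V\cap\Omega$, $[x]\in\Gamma$ with coordinates $[x]_{\mathbb A}\in\mathbb Z^d$; for $(x,y)\in\mathcal A$, $\tau((x,y))=[y]_{\mathbb A}-[x]_{\mathbb A}$, which is $\Gamma$-invariant and thus defined on $\mathcal A_*$, with $\tau$ of the reversed edge equal to $-\tau$. The cycle space $\mathcal C$ of a graph is its integer cycle space (first homology group with $\mathbb Z$ coefficients, a free abelian group of rank equal to the Betti number), generated by closed cycles (sequences of oriented edges forming a closed walk); the index $\tau(\mathbf c)=\sum_{\mathbf e\in\mathbf c}\tau(\mathbf e)$ extends additively to a homomorphism $\mathcal C\to\mathbb Z^d$. In $\widetilde{\mathcal G}_*$ the added loops satisfy $\tau(\mathbf e_x)=0$. *)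

(* Defs.v *)
From HB Require Import structures.
From mathcomp Require Import all_boot all_order all_algebra.
From Stdlib Require Import Relations.
Set Implicit Arguments. Unset Strict Implicit. Unset Printing Implicit Defensive.
Import Order.TTheory GRing.Theory Num.Theory.
Local Open Scope ring_scope.

(* A finite multigraph (loops and multiple edges allowed): vertex type V,
   edge type E, each edge carrying a fixed reference orientation
   src e -> tgt e.  The reversed orientation is encoded by a sign. *)

Definition chain (E : finType) := {ffun E -> int}.

(* Boundary of a chain at a vertex v (a loop contributes 0). *)
Definition boundary (V E : finType) (src tgt : E -> V) (c : chain E) (v : V)
  : int :=
  \sum_(e | tgt e == v) c e - \sum_(e | src e == v) c e.

Definition is_cycle (V E : finType) (src tgt : E -> V) (c : chain E) : Prop :=
  forall v, boundary src tgt c v = 0.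

Definition chain_index (E : finType) (d : nat) (tau : E -> 'rV[int]_d)
  (c : chain E) : 'rV[int]_d :=
  \sum_(e : E) c e *: tau e.

Definition is_cycle0 (V E : finType) (src tgt : E -> V) (d : nat)
  (tau : E -> 'rV[int]_d) (c : chain E) : Prop :=
  is_cycle src tgt c /\ chain_index tau c = 0.

Definition is_Zbasis_on (E I : finType) (J : pred I) (P : chain E -> Prop)
  (b : I -> chain E) : Prop :=
  (forall i, J i -> P (b i)) /\
  forall f, P f ->
    exists! a : {ffun I -> int},
      (forall i, ~~ J i -> a i = 0) /\
      f = [ffun e => \sum_(i | J i) a i * b i e].

(* The Gamma-periodic graph with quotient (V,E,src,tgt) and edge index tau,
   realized through the coordinates x = x0 + [x]: vertices are pairs
   (x0, [x]_A) in V * Z^d, and each quotient edge e gives the edges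
   (src e, n) -- (tgt e, n + tau e) for all n in Z^d. *)
Definition periodic_adj (V E : finType) (src tgt : E -> V) (d : nat)
  (tau : E -> 'rV[int]_d) (x y : V * 'rV[int]_d) : Prop :=
  exists e n, x = (src e, n) /\ y = (tgt e, n + tau e).

Definition periodic_connected (V E : finType) (src tgt : E -> V) (d : nat)
  (tau : E -> 'rV[int]_d) : Prop :=
  forall x y, clos_refl_sym_trans _ (periodic_adj src tgt tau) x y.

(* Modified fundamental graph: one extra loop e_x at every vertex x. *)
Definition msrc (V E : finType) (src : E -> V) (a : E + V) : V :=
  match a with inl e => src e | inr x => x end.

Definition mtau (V E : finType) (d : nat) (tau : E -> 'rV[int]_d) (a : E + V)
  : 'rV[int]_d :=
  match a with inl e => tau e | inr _ => 0 end.

Definition ext_chain (V E : finType) (c : chain E) : chain (E + V)%type :=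
  [ffun a => match a with inl e => c e | inr _ => 0 end].

Definition loop_chain (V E : finType) (x : V) : chain (E + V)%type :=
  [ffun a => match a with inl _ => 0 | inr y => (y == x)%:Z end].

Definition betti (V E : finType) : nat := (#|E| + 1 - #|V|)%N.

(* Main.v *)
Require Import Defs.
From HB Require Import structures.
From mathcomp Require Import all_boot all_order all_algebra.
From mathcomp Require Import zify.
From Stdlib Require Import Relations ClassicalEpsilon.
Set Implicit Arguments. Unset Strict Implicit. Unset Printing Implicit Defensive.
Import Order.TTheory GRing.Theory Num.Theory.
Local Open Scope ring_scope.

Definition rbasis m p (P : 'rV[int]_m -> Prop) (b : 'I_p -> 'rV[int]_m) :=
  (forall t, P (b t)) /\
  forall x, P x -> exists! a : {ffun 'I_p -> int}, x = \sum_t a t *: b t.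

Lemma delta_comb m p (u : 'I_p -> 'I_m) (a : 'I_p -> int) t0 :
  injective u ->
  (\sum_t a t *: delta_mx 0 (u t) : 'rV[int]_m) 0 (u t0) = a t0.
Proof.
move=> inj; rewrite summxE (bigD1 t0) //= big1 ?addr0.
  by rewrite !mxE !eqxx mulr1.
move=> t /negPf nt; rewrite !mxE eqxx /=.
by case: eqP => [/inj e|]; [rewrite e eqxx in nt | rewrite mulr0].
Qed.

Lemma diag_kerP m n (d : seq int) (z : 'rV[int]_m) :
  let D := \matrix_(i, j) (d`_i *+ (i == j :> nat)) : 'M[int]_(m,n) in
  (z *m D = 0) <->
  (forall j : 'I_m, (j < n)%N -> d`_j != 0 -> z 0 j = 0).
Proof.
move=> D; split.
  move=> zD j jn dj; have := congr1 (fun M : 'rV[int]_n => M 0 (Ordinal jn)) zD.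
  rewrite !mxE (bigD1 j) //= big1 ?addr0.
    by rewrite !mxE eqxx mulr1n => /eqP; rewrite mulf_eq0 (negPf dj) orbF => /eqP.
  move=> i ij; rewrite !mxE; case: eqP => [e|]; last by rewrite mulr0.
  by move: ij; rewrite -val_eqE /= e eqxx.
move=> H; apply/matrixP => i k; rewrite !mxE big1 // => j _.
rewrite !mxE; case: (boolP (j == k :> nat)) => [/eqP e|]; last by rewrite mulr0.
case: (boolP (d`_j == 0)) => [/eqP ->|dj]; first by rewrite mul0rn mulr0.
by rewrite ord1 (H j) ?mul0r // e.
Qed.

Lemma diag_basis m n (d : seq int) (L : 'M[int]_m) (R : 'M[int]_n) :
  L \in unitmx -> R \in unitmx ->
  exists b : 'I_#|~: [set j : 'I_m | (j < n)%N && (d`_j != 0)]| -> 'rV[int]_m,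
    rbasis (fun x => x *m (L *m (\matrix_(i, j) (d`_i *+ (i == j :> nat)) : 'M[int]_(m,n)) *m R) = 0) b.
Proof.
move=> uL uR.
set S := [set j : 'I_m | _].
set D := \matrix_(i, j) _.
have kerP : forall x : 'rV[int]_m, x *m (L *m D *m R) = 0 <->
    (forall j : 'I_m, j \in S -> (x *m L) 0 j = 0).
  move=> x; rewrite !mulmxA; split.
    move=> h j; rewrite inE => /andP [jn dj].
    have h2 : x *m L *m D = 0.
      by rewrite -[x *m L *m D](mulmxK uR) h mul0mx.
    by have /diag_kerP := h2; apply.
  move=> h; have -> : x *m L *m D = 0.
    apply/diag_kerP => j jn dj; apply: h; by rewrite inE jn.
  by rewrite mul0mx.
exists (fun t => delta_mx 0 (enum_val t) *m invmx L); split.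
  move=> t; apply/kerP => j jS; rewrite mulmxKV // mxE eqxx /=.
  have := enum_valP t; rewrite inE; case: eqP => [<-|]; last by [].
  by rewrite jS.
move=> x /kerP h.
set z := x *m L.
exists [ffun t => z 0 (enum_val t)]; split.
  apply: (@can_inj _ _ (fun y => y *m L) (fun y => y *m invmx L)).
    by move=> y; rewrite mulmxK.
  rewrite mulmx_suml.
  under eq_bigr do rewrite -scalemxAl mulmxKV //.
  apply/matrixP => i j; rewrite ord1 summxE.
  rewrite -/z.
  rewrite (eq_bigr (fun t => z 0 (enum_val t) * (enum_val t == j)%:R)); last first.
    by move=> t _; rewrite ffunE !mxE eqxx eq_sym.
  rewrite (_ : \sum_(i0 < _) _ = \sum_(j' in ~: S) z 0 j' * (j' == j)%:R); last first.
    by symmetry; exact: (big_enum_val (A := mem (~: S))).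
  rewrite big_mkcond /= (bigD1 j) //= big1 ?addr0.
    rewrite eqxx mulr1; case: ifP => // jS.
    by rewrite h // -(negbK (j \in S)) -in_setC jS.
  by move=> j' /negPf ->; rewrite mulr0 if_same.
move=> a xa; apply/ffunP => t; rewrite ffunE /z xa mulmx_suml.
under eq_bigr do rewrite -scalemxAl mulmxKV //.
by rewrite delta_comb //; apply: enum_val_inj.
Qed.
Lemma card_ordset m (P : pred nat) : #|[set j : 'I_m | P j]| = count P (iota 0 m).
Proof.
rewrite cardE /enum_mem size_filter -enumT -val_enum_ord count_map.
by apply: eq_count => j; rewrite /= inE.
Qed.
Lemma count_min m n (Q : pred nat) :
  count (fun j => (j < n)%N && Q j) (iota 0 m) = count Q (iota 0 (minn m n)).
Proof.
elim: m => [|m IH]; first by rewrite min0n.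
rewrite -addn1 iotaD count_cat IH /= addn0 add0n.
case: (ltnP m n) => mn.
  by rewrite addn1 (minn_idPl mn) -addn1 iotaD count_cat /= addn0.
by rewrite /= addn0 addn1 (minn_idPr (leq_trans mn (leqnSn m))).
Qed.

Lemma rbasis_cast m p q P : p = q ->
  (exists b : 'I_p -> 'rV[int]_m, rbasis P b) -> exists b : 'I_q -> _, rbasis P b.
Proof. by move=> ->. Qed.

Lemma smith_kernels m n (M : 'M[int]_(m,n)) : exists k, [/\ (k <= m)%N, (k <= n)%N,
  exists b : 'I_(m-k) -> 'rV[int]_m, rbasis (fun x => x *m M = 0) b &
  exists b : 'I_(n-k) -> 'rV[int]_n, rbasis (fun y => y *m M^T = 0) b].
Proof.
have [L uL [R uR [d _ eM]]] := int_Smith_normal_form M.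
set S1 := [set j : 'I_m | (j < n)%N && (d`_j != 0)].
set S2 := [set j : 'I_n | (j < m)%N && (d`_j != 0)].
have c1 : #|S1| = count (fun j => d`_j != 0) (iota 0 (minn m n)).
  by rewrite /S1 (card_ordset m (fun j => (j < n)%N && (d`_j != 0))) count_min.
have c2 : #|S2| = count (fun j => d`_j != 0) (iota 0 (minn m n)).
  by rewrite /S2 (card_ordset n (fun j => (j < m)%N && (d`_j != 0))) count_min minnC.
have e1 := cardsC S1; have e2 := cardsC S2; rewrite card_ord in e1; rewrite card_ord in e2.
exists #|S1|; split.
- lia.
- rewrite c1 -c2; lia.
- apply: (@rbasis_cast _ #|~: S1|); first lia.
  rewrite eM; exact: diag_basis.
- apply: (@rbasis_cast _ #|~: S2|); first by rewrite c1 -c2; lia.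
  have -> : M^T = R^T *m (\matrix_(i, j) (d`_i *+ (i == j :> nat)) : 'M[int]_(n,m)) *m L^T.
    rewrite eM !trmx_mul mulmxA; congr (_ *m _ *m _).
    apply/matrixP => i j; rewrite !mxE eq_sym.
    by case: eqP => [->|]; rewrite ?mulr0n.
  by apply: diag_basis; rewrite unitmx_tr.
Qed.

Definition r2f (I : finType) (x : 'rV[int]_#|I|) : chain I :=
  [ffun e => x 0 (enum_rank e)].

Lemma sum_enum (I : finType) (F : I -> int) :
  \sum_(e : I) F e = \sum_(i < #|I|) F (enum_val i).
Proof.
rewrite (reindex (@enum_val I (mem predT))) /=; last exact: onW_bij (enum_val_bij _).
by apply: eq_bigl.
Qed.

Lemma rbasis_ext m p (P Q : 'rV[int]_m -> Prop) b :
  (forall x, P x <-> Q x) -> rbasis (p:=p) P b -> rbasis Q b.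
Proof.
move=> PQ [h1 h2]; split => [t|x /PQ]; first exact/PQ.
exact: h2.
Qed.

Lemma rbasis_ffun (I : finType) p (P : chain I -> Prop) (b : 'I_p -> 'rV[int]_#|I|) :
  rbasis (fun x => P (r2f x)) b -> is_Zbasis_on predT P (fun t => r2f (b t)).
Proof.
move=> [h1 h2]; split => [t _|f Pf]; first exact: h1.
set x : 'rV[int]_#|I| := \row_i f (enum_val i).
have xf : r2f x = f by apply/ffunP => e; rewrite ffunE mxE enum_rankK.
have Px : P (r2f x) by rewrite xf.
have [a [ea ua]] := h2 x Px.
exists a; split.
  split => // ; apply/ffunP => e; rewrite -xf ea !ffunE summxE.
  by apply: eq_bigr => t _; rewrite !mxE ffunE.
move=> a' [_ ea']; apply: ua; apply/matrixP => i j.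
rewrite ord1 summxE mxE ea' ffunE.
by apply: eq_bigr => t _; rewrite ffunE mxE enum_valK.
Qed.

Lemma ffun_kernels (I J : finType) (Mf : I -> J -> int) : exists k, [/\ (k <= #|I|)%N, (k <= #|J|)%N,
  exists b : 'I_(#|I| - k) -> chain I,
    is_Zbasis_on predT (fun f => forall j, \sum_i f i * Mf i j = 0) b &
  exists b : 'I_(#|J| - k) -> chain J,
    is_Zbasis_on predT (fun g => forall i, \sum_j Mf i j * g j = 0) b].
Proof.
set Mm := \matrix_(i, j) Mf (enum_val i) (enum_val j) : 'M[int]_(#|I|, #|J|).
have [k [hk1 hk2 [b1 hb1] [b2 hb2]]] := smith_kernels Mm.
exists k; split => //.
- exists (fun t => r2f (b1 t)); apply: rbasis_ffun; apply: rbasis_ext hb1 => x.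
  have E : forall j, \sum_i (r2f x) i * Mf i j = (x *m Mm) 0 (enum_rank j).
    move=> j; rewrite sum_enum mxE; apply: eq_bigr => i _.
    by rewrite ffunE enum_valK mxE enum_rankK.
  split => [h j|h]; first by rewrite E h mxE.
  apply/matrixP => i k'; rewrite ord1 -(enum_valK k') -E h mxE //.
- exists (fun t => r2f (b2 t)); apply: rbasis_ffun; apply: rbasis_ext hb2 => x.
  have E : forall i, \sum_j Mf i j * (r2f x) j = (x *m Mm^T) 0 (enum_rank i).
    move=> i; rewrite sum_enum mxE; apply: eq_bigr => j _.
    by rewrite ffunE enum_valK !mxE enum_rankK mulrC.
  split => [h j|h]; first by rewrite E h mxE.
  apply/matrixP => i k'; rewrite ord1 -(enum_valK k') -E h mxE //.
Qed.

Definition Mf (V E : finType) (src tgt : E -> V) d (tau : E -> 'rV[int]_d)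
  (e : E) (s : V + 'I_d) : int :=
  match s with inl v => (tgt e == v)%:R - (src e == v)%:R | inr j => tau e 0 j end.

Definition pv (I J : finType) (M : I -> J -> int) (c : chain I) (j : J) :=
  \sum_i c i * M i j.

Lemma sum_delta (T : finType) (a : T) (F : T -> int) :
  \sum_v (a == v)%:R * F v = F a.
Proof.
rewrite (bigD1 a) //= eqxx mul1r big1 ?addr0 // => v av.
by rewrite eq_sym (negPf av) mul0r.
Qed.

Lemma sum_delta_r (T : finType) (a : T) (F : T -> int) :
  \sum_v F v * (v == a)%:R = F a.
Proof.
rewrite -[RHS](sum_delta a); apply: eq_bigr => v _; by rewrite mulrC eq_sym.
Qed.

Lemma pv_bound (V E : finType) (src tgt : E -> V) d (tau : E -> 'rV[int]_d) c v :
  boundary src tgt c v = pv (Mf src tgt tau) c (inl v).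
Proof.
rewrite /boundary /pv /Mf.
under [RHS]eq_bigr do rewrite mulrBr.
rewrite sumrB !(big_mkcond (fun e => _ == v)) /=.
by congr (_ - _); apply: eq_bigr => e _; case: eqP; rewrite ?mulr1 ?mulr0.
Qed.

Lemma pv_tau (V E : finType) (src tgt : E -> V) d (tau : E -> 'rV[int]_d) c j :
  chain_index tau c 0 j = pv (Mf src tgt tau) c (inr j).
Proof.
rewrite /chain_index /pv /Mf summxE; apply: eq_bigr => e _; by rewrite mxE.
Qed.

Lemma pv_add (I J : finType) (M : I -> J -> int) (c1 c2 : chain I) j :
  pv M [ffun e => c1 e + c2 e] j = pv M c1 j + pv M c2 j.
Proof.
rewrite /pv -big_split /=; apply: eq_bigr => e _; by rewrite ffunE mulrDl.
Qed.

Lemma pv_opp (I J : finType) (M : I -> J -> int) (c : chain I) j :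
  pv M [ffun e => - c e] j = - pv M c j.
Proof.
rewrite /pv -sumrN /=; apply: eq_bigr => e _; by rewrite ffunE mulNr.
Qed.

Lemma pv_comb (I J K : finType) (M : I -> J -> int) (a : K -> int) (h : K -> chain I) j :
  pv M [ffun e => \sum_k a k * h k e] j = \sum_k a k * pv M (h k) j.
Proof.
rewrite /pv; under eq_bigr do rewrite ffunE mulr_suml.
rewrite exchange_big /=; apply: eq_bigr => k _; rewrite mulr_sumr.
by apply: eq_bigr => e _; rewrite mulrA.
Qed.

Lemma pv_ext (I J : finType) (M : I -> J -> int) (c1 c2 : chain I) j :
  (forall e, c1 e = c2 e) -> pv M c1 j = pv M c2 j.
Proof. by move=> h; apply: eq_bigr => e _; rewrite h. Qed.

Lemma pairing (I J : finType) (M : I -> J -> int) (x : chain I) (y : chain J) :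
  (forall i, \sum_j M i j * y j = 0) -> \sum_j pv M x j * y j = 0.
Proof.
move=> h; rewrite /pv; under eq_bigr do rewrite mulr_suml.
rewrite exchange_big /= big1 // => i _.
rewrite (eq_bigr (fun j => x i * (M i j * y j))); first by rewrite -mulr_sumr h mulr0.
by move=> j _; rewrite mulrA.
Qed.

Lemma cycle0_pv (V E : finType) (src tgt : E -> V) d (tau : E -> 'rV[int]_d) c :
  is_cycle0 src tgt tau c <-> forall s, pv (Mf src tgt tau) c s = 0.
Proof.
split.
  move=> [hc ht] [v|j]; first by rewrite -pv_bound hc.
  by rewrite -pv_tau ht mxE.
move=> h; split; first by move=> v; rewrite (pv_bound _ _ tau) h.
by apply/matrixP => i j; rewrite ord1 (pv_tau src tgt) h mxE.
Qed.

Lemma zb_span (E I : finType) (P : chain E -> Prop) (b : I -> chain E) f :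
  is_Zbasis_on predT P b -> P f ->
  exists a : {ffun I -> int}, forall e, f e = \sum_i a i * b i e.
Proof.
move=> [_ h] Pf; have [a [[_ ea] _]] := h f Pf.
by exists a => e; rewrite {1}ea ffunE.
Qed.

Lemma zb_indep (E I : finType) (P : chain E -> Prop) (b : I -> chain E) :
  is_Zbasis_on predT P b -> P 0 ->
  forall a : {ffun I -> int}, (forall e, \sum_i a i * b i e = 0) -> forall i, a i = 0.
Proof.
move=> [_ h] P0 a ha i; have [a0 [_ ua]] := h 0 P0.
have e1 : a0 = a.
  apply: ua; split => //; apply/ffunP => e; rewrite !ffunE ha //.
have e2 : a0 = [ffun => 0].
  apply: ua; split => //; apply/ffunP => e; rewrite !ffunE big1 // => j _; by rewrite ffunE mul0r.
by rewrite -e1 e2 ffunE.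
Qed.

Lemma zb_intro (E I : finType) (P : chain E -> Prop) (b : I -> chain E) :
  (forall i, P (b i)) ->
  (forall f, P f -> exists a : {ffun I -> int}, forall e, f e = \sum_i a i * b i e) ->
  (forall a : {ffun I -> int}, (forall e, \sum_i a i * b i e = 0) -> forall i, a i = 0) ->
  is_Zbasis_on predT P b.
Proof.
move=> h1 h2 h3; split => [i _|f Pf]; first exact: h1.
have [a ea] := h2 f Pf; exists a; split.
  by split => //; apply/ffunP => e; rewrite ffunE ea.
move=> a' [_ ea']; apply/ffunP => i.
suff : [ffun i => a i - a' i] i = 0 by rewrite ffunE => /eqP; rewrite subr_eq0 => /eqP.
apply: h3 => e.
under eq_bigr do rewrite ffunE mulrBl.
by rewrite sumrB -ea; move/ffunP: ea' => /(_ e); rewrite ffunE => <-; rewrite subrr.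
Qed.

Lemma zb_cast (E : finType) p q (P : chain E -> Prop) : p = q ->
  (exists b : 'I_p -> chain E, is_Zbasis_on predT P b) ->
  exists b : 'I_q -> chain E, is_Zbasis_on predT P b.
Proof. by move=> ->. Qed.

Lemma zb_ext (E I : finType) (P Q : chain E -> Prop) (b : I -> chain E) :
  (forall f, P f <-> Q f) -> is_Zbasis_on predT P b -> is_Zbasis_on predT Q b.
Proof.
move=> PQ [h1 h2]; split => [i _|f /PQ Pf]; first by apply/PQ; exact: h1.
exact: h2.
Qed.

Lemma rank1 (J : finType) (Q : chain J -> Prop) p (b : 'I_p -> chain J)
  (u0 : chain J) j0 :
  is_Zbasis_on predT Q b -> Q 0 -> u0 j0 != 0 ->
  (forall y, Q y -> exists c, forall j, y j = c * u0 j) -> Q u0 -> p = 1%N.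
Proof.
case: p b => [|[|p]] b hb Q0 nz hy Qu //.
  have [a ea] := zb_span hb Qu.
  by move: nz; rewrite ea big_ord0 eqxx.
set t0 : 'I_p.+2 := ord0.
set t1 : 'I_p.+2 := Ordinal (isT : (1 < p.+2)%N).
have [c0 hc0] := hy (b t0) (hb.1 t0 isT).
have [c1 hc1] := hy (b t1) (hb.1 t1 isT).
have t10 : (t1 == t0) = false by [].
have := zb_indep hb Q0 (a := [ffun t => c1 * (t0 == t)%:R - c0 * (t1 == t)%:R]).
move=> H.
have H' : forall t, c1 * (t0 == t)%:R - c0 * (t1 == t)%:R = 0.
  move=> t; rewrite -(H _ t) ?ffunE // => e.
  under eq_bigr do rewrite ffunE mulrBl -!mulrA.
  rewrite sumrB -!mulr_sumr !sum_delta hc0 hc1.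
  by rewrite mulrA (mulrC c1) -mulrA subrr.
have ec1 := H' t0; rewrite eqxx t10 mulr0 subr0 mulr1 in ec1.
have ec0 := H' t1; rewrite eq_sym t10 eqxx mulr0 sub0r mulr1 in ec0.
move/eqP: ec0; rewrite oppr_eq0 => /eqP ec0.
have H2 := zb_indep hb Q0 (a := [ffun t => (t0 == t)%:R]).
have H3 : [ffun t => (t0 == t)%:R] t0 = 0 :> int.
  apply: H2 => e; under eq_bigr do rewrite ffunE.
  by rewrite sum_delta hc0 ec0 mul0r.
by move: H3; rewrite ffunE eqxx => /eqP; rewrite oner_eq0.
Qed.

Lemma conn_const (V E : finType) (src tgt : E -> V) d (tau : E -> 'rV[int]_d)
  (hconn : periodic_connected src tgt tau) (f : V -> int) :
  (forall e, f (src e) = f (tgt e)) -> forall v w, f v = f w.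
Proof.
move=> hf v w.
suff H : forall x y, clos_refl_sym_trans _ (periodic_adj src tgt tau) x y -> f x.1 = f y.1.
  exact: (H (v, 0) (w, 0) (hconn _ _)).
move=> x y; elim => {x y}.
- by move=> x y [e [n [-> ->]]] /=.
- by [].
- by move=> x y _ ->.
- by move=> x y z _ -> _ ->.
Qed.

Definition tgtval (V : finType) d (x y : V * 'rV[int]_d) (s : V + 'I_d) : int :=
  match s with
  | inl v => (y.1 == v)%:R - (x.1 == v)%:R
  | inr j => y.2 0 j - x.2 0 j
  end.

Lemma conn_surj (V E : finType) (src tgt : E -> V) d (tau : E -> 'rV[int]_d)
  (hconn : periodic_connected src tgt tau) (v0 : V) (j0 : 'I_d) :
  exists x : chain E, (forall v, pv (Mf src tgt tau) x (inl v) = 0) /\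
    (forall j, pv (Mf src tgt tau) x (inr j) = (j == j0)%:R).
Proof.
suff H : forall x y, clos_refl_sym_trans _ (periodic_adj src tgt tau) x y ->
  exists c : chain E, forall s, pv (Mf src tgt tau) c s = tgtval x y s.
  have [c hc] := H (v0, 0) (v0, delta_mx 0 j0) (hconn _ _).
  exists c; split => [v|j]; rewrite hc /= ?subrr // !mxE subr0 eqxx //.
move=> x y; elim => {x y}.
- move=> x y [e [n [-> ->]]]; exists [ffun e' => (e == e')%:R] => s.
  rewrite /pv; under eq_bigr do rewrite ffunE.
  rewrite sum_delta; case: s => [v|j] //=.
  by rewrite mxE addrAC subrr add0r.
- move=> x; exists 0 => s; rewrite /pv big1 => [|e _]; last by rewrite ffunE mul0r.
  by case: s => [v|j]; rewrite /= subrr.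
- move=> x y _ [c hc]; exists [ffun e => - c e] => s; rewrite pv_opp hc.
  by case: s => [v|j]; rewrite /= opprB.
- move=> x y z _ [c1 h1] _ [c2 h2]; exists [ffun e => c1 e + c2 e] => s.
  rewrite pv_add h1 h2; case: s => [v|j] /=; by rewrite addrC addrA subrK.
Qed.

Lemma pv_zero (I J : finType) (M : I -> J -> int) (c : chain I) s :
  (forall e, c e = 0) -> pv M c s = 0.
Proof. by move=> h; rewrite /pv big1 // => e _; rewrite h mul0r. Qed.

Lemma pv_sub_comb (I J K : finType) (M : I -> J -> int) (f : chain I) (a : K -> int)
  (h : K -> chain I) s :
  pv M [ffun e => f e - \sum_k a k * h k e] s = pv M f s - \sum_k a k * pv M (h k) s.
Proof.
have := pv_comb M a h s; rewrite /pv => <-.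
under eq_bigr do rewrite ffunE mulrBl.
by rewrite sumrB; congr (_ - _); apply: eq_bigr => e _; rewrite ffunE.
Qed.

Lemma split_nat b d q (F : nat -> int) : b = (d + q)%N ->
  \sum_(i < b) F i = \sum_(j < d) F j + \sum_(t < q) F (t + d)%N.
Proof.
move=> ->; rewrite -(big_mkord xpredT F) -(big_mkord xpredT F) -(big_mkord xpredT (fun t => F (t + d)%N)).
rewrite (@big_cat_nat _ _ _ d) ?leq_addr //=.
by congr (_ + _); rewrite -{1}(add0n d) big_addn addKn.
Qed.

Lemma mod_boundary (V E : finType) (src tgt : E -> V) (F : chain (E + V)%type) v :
  boundary (msrc src) (msrc tgt) F v = boundary src tgt [ffun e => F (inl e)] v.
Proof.
rewrite /boundary !big_sumType /=.
under [in RHS]eq_bigr do rewrite ffunE.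
under [in X in _ = _ - X]eq_bigr do rewrite ffunE.
by rewrite opprD addrACA subrr addr0.
Qed.

Lemma cycle_ext (V E : finType) (src tgt : E -> V) (c1 c2 : chain E) :
  (forall e, c1 e = c2 e) -> is_cycle src tgt c1 -> is_cycle src tgt c2.
Proof.
move=> h hc v; rewrite -(hc v) /boundary.
by congr (_ - _); apply: eq_bigr => e _; rewrite h.
Qed.

Theorem lemma3p6 (V E : finType) (src tgt : E -> V) (d : nat)
  (tau : E -> 'rV[int]_d)
  (hd : (0 < d)%N) (hV : (0 < #|V|)%N)
  (hconn : periodic_connected src tgt tau) :
  exists c : 'I_(betti V E) -> chain E,
    [/\ is_Zbasis_on predT (is_cycle src tgt) c,
        (forall i : 'I_(betti V E), forall hi : (i < d)%N,
           chain_index tau (c i) = delta_mx 0 (Ordinal hi)),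
        is_Zbasis_on (fun i : 'I_(betti V E) => (d <= i)%N)
          (is_cycle0 src tgt tau) c
      & is_Zbasis_on predT (is_cycle (msrc src) (msrc tgt))
          (fun a : 'I_(betti V E) + V =>
             match a with
             | inl i => ext_chain V (c i)
             | inr x => loop_chain E x
             end)].
Proof.
set M := Mf src tgt tau.
case/card_gt0P: hV => v0 _.
have hsurj := conn_surj hconn v0.
have [cyc hcyc] : exists cyc : 'I_d -> chain E, forall j0,
    (forall v, pv M (cyc j0) (inl v) = 0) /\
    (forall j, pv M (cyc j0) (inr j) = (j == j0)%:R).
  exists (fun j0 => proj1_sig (constructive_indefinite_description _ (hsurj j0))).
  by move=> j0; exact: proj2_sig (constructive_indefinite_description _ (hsurj j0)).
have [k [hk1 hk2 [b0 hb0] [br hbr]]] := ffun_kernels M.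
set u0 : chain (V + 'I_d)%type := [ffun s => if s is inl _ then 1 else 0].
have Qy : forall y : chain (V + 'I_d)%type, (forall e, \sum_s M e s * y s = 0) ->
    exists c, forall s, y s = c * u0 s.
  move=> y hy.
  have yr : forall j, y (inr j) = 0.
    move=> j0; have := pairing (cyc j0) hy.
    rewrite big_sumType /= (eq_bigr (fun _ => 0)) => [|v _]; last first.
      by rewrite (hcyc j0).1 mul0r.
    rewrite big1_eq add0r (eq_bigr (fun j => y (inr j) * (j == j0)%:R)) => [|j _].
      by rewrite sum_delta_r.
    by rewrite (hcyc j0).2 mulrC.
  have hy' : forall e, y (inl (src e)) = y (inl (tgt e)).
    move=> e; have := hy e; rewrite big_sumType /= [X in _ + X](eq_bigr (fun _ => 0)) => [|j _]; last first.
      by rewrite yr mulr0.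
    rewrite big1_eq addr0 /M /Mf.
    under eq_bigr do rewrite mulrBl.
    by rewrite sumrB !sum_delta => /eqP; rewrite subr_eq0 => /eqP ->.
  exists (y (inl v0)) => [[v|j]]; rewrite ffunE ?mulr1 ?mulr0 ?yr //.
  exact: (conn_const hconn (f := fun v => y (inl v)) hy' v v0).
have Qu : forall e, \sum_s M e s * u0 s = 0.
  move=> e; rewrite big_sumType /= [X in _ + X](eq_bigr (fun _ => 0)) => [|j _]; last first.
    by rewrite ffunE mulr0.
  rewrite big1_eq addr0 /M /Mf.
  under eq_bigr do rewrite mulrBl.
  by rewrite sumrB !sum_delta !ffunE subrr.
have Q0 : forall e, \sum_s M e s * (0 : chain (V + 'I_d)%type) s = 0.
  by move=> e; rewrite big1 // => s _; rewrite ffunE mulr0.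
have nz : u0 (inl v0) != 0 by rewrite ffunE.
have r1 := rank1 hbr Q0 nz Qy Qu.
rewrite card_sum card_ord in r1.
set q := (betti V E - d)%N.
have eq_q : (#|E| - k)%N = q by rewrite /q /betti; lia.
have hdb : (d <= betti V E)%N by rewrite /betti; lia.
have hbq : betti V E = (d + q)%N by rewrite /q subnKC.
have [kb hkb] := zb_cast eq_q (ex_intro _ b0 hb0).
have kbP : forall t s, pv M (kb t) s = 0 := fun t => hkb.1 t isT.
have P0 : forall s, \sum_e (0 : chain E) e * M e s = 0.
  by move=> s; rewrite big1 // => e _; rewrite ffunE mul0r.
have kb_indep := zb_indep hkb P0.
have kb_span : forall f, (forall s, pv M f s = 0) ->
    exists a : {ffun 'I_q -> int}, forall e, f e = \sum_t a t * kb t e.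
  by move=> f hf; apply: (zb_span hkb).
pose cn (n : nat) : chain E :=
  if (n < d)%N then oapp cyc 0 (insub n) else oapp kb 0 (insub (n - d)%N).
have cn_cyc : forall j : 'I_d, cn j = cyc j by move=> j; rewrite /cn ltn_ord valK.
have cn_kb : forall t : 'I_q, cn (t + d)%N = kb t.
  by move=> t; rewrite /cn ltnNge leq_addl /= addnK valK.
have cn_ge : forall n s, (d <= n)%N -> pv M (cn n) s = 0.
  move=> n s hn; rewrite /cn ltnNge hn /=.
  by case: insub => [t|] /=; [exact: kbP | apply: pv_zero => e; rewrite ffunE].
have cn_inl : forall n v, pv M (cn n) (inl v) = 0.
  move=> n v; case: (ltnP n d) => hn; last exact: cn_ge.
  by have := cn_cyc (Ordinal hn) => /= ->; exact: (hcyc _).1.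
have cn_inr : forall (n : nat) (j : 'I_d), pv M (cn n) (inr j) = (n == j)%:R.
  move=> n j; case: (ltnP n d) => hn.
    have := cn_cyc (Ordinal hn) => /= ->; rewrite (hcyc _).2.
    by rewrite -val_eqE /= eq_sym.
  rewrite cn_ge //; case: eqP => // e; move: hn; rewrite e leqNgt ltn_ord.
  by [].
pose c := fun i : 'I_(betti V E) => cn i.
have T : forall (a : {ffun 'I_(betti V E) -> int}) (j : 'I_d),
    pv M [ffun e => \sum_i a i * c i e] (inr j) = a (widen_ord hdb j).
  move=> a j; rewrite pv_comb -(sum_delta_r (widen_ord hdb j) a).
  by apply: eq_bigr => i _; rewrite /c cn_inr -val_eqE.
have cycP : forall f, is_cycle src tgt f <-> forall v, pv M f (inl v) = 0.
  move=> f; split => h v; first by rewrite -pv_bound h.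
  by rewrite (pv_bound _ _ tau) h.
have G1 : is_Zbasis_on predT (is_cycle src tgt) c.
  apply: zb_intro.
  - by move=> i; apply/cycP => v; exact: cn_inl.
  - move=> f /cycP hf.
    pose w := fun j : 'I_d => pv M f (inr j).
    set g := [ffun e => f e - \sum_j w j * cyc j e].
    have hg : forall s, pv M g s = 0.
      move=> s; rewrite pv_sub_comb; case: s => [v|j'].
        by rewrite hf big1 ?subrr // => j _; rewrite (hcyc j).1 mulr0.
      rewrite (eq_bigr (fun j => w j * (j == j')%:R)) => [|j _]; last first.
        by rewrite (hcyc j).2 eq_sym.
      by rewrite sum_delta_r subrr.
    have [a' ea'] := kb_span g hg.
    pose an (n : nat) := if (n < d)%N then oapp w 0 (insub n)
                         else oapp a' 0 (insub (n - d)%N).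
    exists [ffun i : 'I_(betti V E) => an i] => e.
    under eq_bigr do rewrite ffunE.
    rewrite (split_nat (fun n => an n * cn n e) hbq).
    under eq_bigr do rewrite cn_cyc /an ltn_ord valK /=.
    under [X in _ + X]eq_bigr do rewrite cn_kb /an ltnNge leq_addl /= addnK valK /=.
    by rewrite -ea' /g ffunE addrC subrK.
  - move=> a ha.
    have step1 : forall j : 'I_d, a (widen_ord hdb j) = 0.
      move=> j; rewrite -T; apply: pv_zero => e; by rewrite ffunE ha.
    pose an (n : nat) := oapp a 0 (insub n : option 'I_(betti V E)).
    have anE : forall i : 'I_(betti V E), an i = a i by move=> i; rewrite /an valK.
    have step2 : forall t : 'I_q, an (t + d)%N = 0.
      have H := kb_indep [ffun t : 'I_q => an (t + d)%N].
      move=> t; rewrite -(H _ t) ?ffunE // => e.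
      have := ha e; under eq_bigr do rewrite -anE.
      rewrite (split_nat (fun n => an n * cn n e) hbq) big1 ?add0r.
        by move=> h; rewrite -[X in _ = X]h; apply: eq_bigr => t' _; rewrite ffunE cn_kb.
      move=> j _; have -> : an j = 0 by rewrite -(step1 j) -anE.
      by rewrite mul0r.
    move=> i; case: (ltnP i d) => hi.
      by rewrite -(step1 (Ordinal hi)); congr (a _); apply: val_inj.
    have hiq : (i - d < q)%N by rewrite /q; move: (ltn_ord i); lia.
    have := step2 (Ordinal hiq); rewrite /= subnK // anE //.
have G2 : forall i : 'I_(betti V E), forall hi : (i < d)%N,
    chain_index tau (c i) = delta_mx 0 (Ordinal hi).
  move=> i hi; apply/matrixP => i' j; rewrite ord1 (pv_tau src tgt) /c cn_inr !mxE eqxx /=.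
  by rewrite -val_eqE /= eq_sym.
have cyc0 : is_cycle src tgt 0.
  by move=> v; rewrite (pv_bound _ _ tau); apply: pv_zero => e; rewrite ffunE.
have G3 : is_Zbasis_on (fun i : 'I_(betti V E) => (d <= i)%N) (is_cycle0 src tgt tau) c.
  split.
    by move=> i hi; apply/cycle0_pv => s; exact: cn_ge.
  move=> f /cycle0_pv hf.
  have fc : is_cycle src tgt f by apply/cycP => v; exact: hf.
  have [a ea] := zb_span G1 fc.
  have a0 : forall i : 'I_(betti V E), ~~ (d <= i)%N -> a i = 0.
    move=> i; rewrite -ltnNge => hi.
    have -> : i = widen_ord hdb (Ordinal hi) by apply: val_inj.
    rewrite -T -[X in _ = X](hf (inr (Ordinal hi))); apply: pv_ext => e; by rewrite ffunE ea.
  have restr : forall a' : {ffun 'I_(betti V E) -> int},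
      (forall i : 'I_(betti V E), ~~ (d <= i)%N -> a' i = 0) -> forall e,
      \sum_(i : 'I_(betti V E) | (d <= i)%N) a' i * c i e = \sum_i a' i * c i e.
    move=> a' h e; rewrite [RHS](bigID (fun i : 'I_(betti V E) => (d <= i)%N)) /=.
    by rewrite [X in _ + X]big1 ?addr0 // => i /h ->; rewrite mul0r.
  exists a; split.
    split => //; apply/ffunP => e; by rewrite ffunE restr // ea.
  move=> a' [h1 h2].
  have [_ U] := G1; have [a1 [_ u1]] := U f fc.
  have Pa : (forall i, ~~ predT i -> a i = 0) /\ f = [ffun e => \sum_(i | predT i) a i * c i e].
    split => //; apply/ffunP => e; by rewrite ffunE ea.
  have Pa' : (forall i, ~~ predT i -> a' i = 0) /\ f = [ffun e => \sum_(i | predT i) a' i * c i e].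
    split => //; apply/ffunP => e; move/ffunP: h2 => /(_ e); rewrite !ffunE restr //.
  by rewrite -(u1 a Pa) (u1 a' Pa').
have mcyc : forall F : chain (E + V)%type,
    is_cycle (msrc src) (msrc tgt) F <-> is_cycle src tgt [ffun e => F (inl e)].
  move=> F; split => h v; [rewrite -mod_boundary | rewrite mod_boundary]; exact: h.
exists c; split => //.
apply: zb_intro.
- case => [i|x]; apply/mcyc.
    apply: (@cycle_ext _ _ _ _ (c i)); first by move=> e; rewrite !ffunE.
    exact: G1.1 i isT.
  by move=> v; rewrite (pv_bound _ _ tau); apply: pv_zero => e; rewrite !ffunE.
- move=> F /mcyc hF; have [a ea] := zb_span G1 hF.
  exists [ffun s => match s with inl i => a i | inr x => F (inr x) end] => s'.
  rewrite big_sumType /=; case: s' => [e|y].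
    under eq_bigr do rewrite !ffunE.
    under [X in _ + X]eq_bigr do rewrite !ffunE mulr0.
    by rewrite big1_eq addr0; have := ea e; rewrite ffunE.
  under eq_bigr do rewrite !ffunE mulr0.
  under [X in _ + X]eq_bigr do rewrite !ffunE -natz eq_sym.
  by rewrite big1_eq add0r sum_delta_r.
- move=> A hA.
  have hi : forall i, A (inl i) = 0.
    have H := @zb_indep _ _ _ _ G1 cyc0 [ffun i => A (inl i)].
    move=> i; rewrite -(H _ i) ?ffunE // => e.
    have := hA (inl e); rewrite big_sumType /=.
    under eq_bigr do rewrite !ffunE.
    under [X in _ + X]eq_bigr do rewrite !ffunE mulr0.
    rewrite big1_eq addr0 => h; rewrite -[X in _ = X]h.
    by apply: eq_bigr => i' _; rewrite !ffunE.
  case => [i|x]; first exact: hi.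
  have := hA (inr x); rewrite big_sumType /=.
  under eq_bigr do rewrite !ffunE mulr0.
  under [X in _ + X]eq_bigr do rewrite !ffunE -natz eq_sym.
  by rewrite big1_eq add0r sum_delta_r.
Qed.
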